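(* Let $L \geq 2$, $m = L+1$, $\gamma = (L+1)^3$, and for $i \in \{0,\ldots,L\}$, $k\in[m]$ let $\pi_i(A_k) = w_i(k)/\sum_{h=1}^m w_i(h)$ with $w_i(k) = \gamma^{2(i+1)k - k^2+1} + \sum_{r=0}^L\gamma^{(2r+1)(i+1)-r^2-r}$. Let $\overline{\pi}(\xi) = \prod_{i=0}^L \pi_i(A_{\xi_i})$ for $\xi\in[m]^{L+1}$, let $\lambda = (1, 2, \ldots, m)$, let $\mathcal{X}_\lambda$ be the set of states reachable from $\lambda$ by finitely many swaps of adjacent levels, and $\overline{\pi}_\lambda = \overline{\pi}/\overline{\pi}(\mathcal{X}_\lambda)$ on $\mathcal{X}_\lambda$. Let $S \subseteq \mathcal{X}_\lambda$ be the set of states $\xi$ for which there is a sequence $\lambda=\tau^0,\ldots,\tau^N=\xi$, each obtained from the previous by swapping the entries of two adjacent levels, such that every $\tau^s$ differs from $\lambda$ in at most $\lfloor\log_2 L\rfloor - 1$ coordinates, and let $S^C = \mathcal{X}_\lambda\setminus S$. Let $\overline{P}_{pt}$ be a stochastic matrix on $\mathcal{X}_\lambda$ such that $\overline{P}_{pt}(\xi,\tilde\xi) > 0$ with $\xi\neq\tilde\xi$ only if $\tilde\xi$ is obtained from $\xi$ by swapping the entries of two adjacent levels. Then $$\sum_{\xi\in S,\,\tilde\xi\in S^C}\overline{\pi}_\lambda(\xi)\overline{P}_{pt}(\xi,\tilde\xi) \leq 4e\left(\frac{1}{L+1}\right)^{\lfloor\log_2 L\rfloor - 2}.$$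
   Context: A swap of adjacent levels maps $\xi$ to $(j-1,j)\xi$, the vector with entries at positions $j-1$ and $j$ exchanged, $j\in\{1,\ldots,L\}$. Two states differ in coordinate $\ell$ if their $\ell$-th entries are unequal. In the paper $\overline{P}_{pt}$ is the projected parallel tempering chain of a hypothetical instance in which the only moves between modes are swaps of adjacent temperature levels. *)

(* Defs.v *)
From HB Require Import structures.
From mathcomp Require Import all_boot all_order all_algebra.
From mathcomp Require Import all_classical all_reals all_analysis.
Set Implicit Arguments. Unset Strict Implicit. Unset Printing Implicit Defensive.
Import Order.TTheory GRing.Theory Num.Theory.
Local Open Scope ring_scope.

(* Conventions: levels i in {0,..,L} are 'I_L.+1; modes A_1..A_m (m = L+1)
   are encoded 0-based: the value k : 'I_L.+1 stands for A_(k+1). *)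
Definition state (L : nat) := {ffun 'I_L.+1 -> 'I_L.+1}.

Definition lam (L : nat) : state L := [ffun i => i].

Definition swap_adj (L : nat) (j : 'I_L.+1) (xi : state L) : state L :=
  [ffun i => if i == j then xi (inord j.-1)
            else if i == inord j.-1 then xi j else xi i].

Definition adj_swap (L : nat) : rel (state L) :=
  fun xi eta => [exists j : 'I_L.+1, (0 < j)%N && (eta == swap_adj j xi)].

Definition Xlam (L : nat) : {set state L} := [set xi | connect (@adj_swap L) (lam L) xi].

Definition ndiff (L : nat) (xi : state L) : nat := #|[set i | xi i != lam L i]|.

Definition dS (L : nat) : nat := (trunc_log 2 L - 1)%N.

(* S: reachable from lambda by adjacent swaps with every intermediate state
   (lambda itself differs in 0 coordinates) differing from lambda in at most d coordinates *)
Definition Sset (L : nat) : {set state L} :=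
  [set xi | connect [rel x y | adj_swap x y && (ndiff y <= dS L)%N] (lam L) xi].

Definition SCset (L : nat) : {set state L} := Xlam L :\: Sset L.

Section Weights.
Variable R : realType.
Variable L : nat.

Definition gam : R := ((L.+1) ^ 3)%:R.

(* w_i(k) with k 1-based, i.e. k = (kk : 'I_L.+1) + 1 *)
Definition wt (i kk : 'I_L.+1) : R :=
  let k : int := (kk.+1)%:Z in
  let i1 : int := (i.+1)%:Z in
  gam ^ (2 * i1 * k - k * k + 1)
  + \sum_(r < L.+1) gam ^ ((2 * (r%:Z) + 1) * i1 - r%:Z * r%:Z - r%:Z).

Definition pii (i kk : 'I_L.+1) : R := wt i kk / \sum_(h : 'I_L.+1) wt i h.

Definition pibar (xi : state L) : R := \prod_(i : 'I_L.+1) pii i (xi i).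

Definition pilam (xi : state L) : R := pibar xi / \sum_(eta in Xlam L) pibar eta.
End Weights.

(* Main.v *)
Require Import Defs.
From HB Require Import structures.
From mathcomp Require Import all_boot all_order all_algebra.
From mathcomp Require Import all_classical all_reals all_analysis.
From mathcomp Require Import zify ring lra.
Import Order.TTheory GRing.Theory Num.Theory.
Local Open Scope ring_scope.

Lemma gz_le {R : realType} {g : R} {x : int} : 1 <= g -> x <= 0 ->
  g ^ x <= (x == 0)%:R + g^-1.
Proof.
move=> g1; have g0 : 0 < g by apply: lt_le_trans g1.
case: x => [n|n] hx.
  have -> : n = 0%N by move: hx; rewrite lez_nat; case: n.
  by rewrite expr0z eqxx lerDl invr_ge0 ltW.
rewrite /= add0r.
rewrite lef_pV2 ?posrE ?exprn_gt0 //.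
exact: ler_eXnr.
Qed.

Lemma L1 {R : realType} (g : R) (d : int) : 1 <= g ->
  g ^ (-(d*(d-1))) <= (d==0)%:R + (d==1)%:R + g^-1.
Proof.
move=> g1.
have hx : -(d*(d-1)) <= 0.
  rewrite oppr_le0; have [h|h] := lerP d 0.
    by apply: mulr_le0 => //; lia.
  by apply: mulr_ge0; lia.
have := gz_le g1 hx. move=> H0. apply: (le_trans H0). rewrite lerD2r.
case: eqP => [H|_]; last by rewrite addr_ge0.
have : d * (d - 1) == 0 by rewrite -oppr_eq0 H.
rewrite mulf_eq0 subr_eq0 => /orP[] /eqP ->; rewrite eqxx /=.
  by rewrite lerDl.
by rewrite lerDr.
Qed.

Lemma L2 {R : realType} (g : R) (d : int) : 1 <= g -> d != 0 ->
  g ^ (1 - d*d) <= (d==1)%:R + (d==-1)%:R + g^-1.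
Proof.
move=> g1 d0.
have hx : 1 - d*d <= 0 by move: d0; rewrite subr_le0; nia.
have := gz_le g1 hx. move=> H0. apply: (le_trans H0). rewrite lerD2r.
case: eqP => [H|_]; last by rewrite addr_ge0.
have : (d - 1) * (d + 1) == 0.
  apply/eqP; move: H; lia.
rewrite mulf_eq0 subr_eq0 addr_eq0 => /orP[] /eqP ->; rewrite eqxx /=.
  by rewrite lerDl.
by rewrite lerDr.
Qed.

Lemma ind_sum {R : realType} n t : \sum_(k < n) ((k : nat) == t)%:R <= 1 :> R.
Proof.
have [ht|ht] := ltnP t n.
  rewrite (bigD1 (Ordinal ht)) //= eqxx big1 ?addr0 // => k hk.
  case: eqP => // hkt; case/eqP: hk; exact: val_inj.
rewrite big1 // => k _; case: eqP => // hk.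
by move: (ltn_ord k); rewrite hk ltnNge ht.
Qed.

Lemma splitz {R : realType} (g : R) (c e : int) : g != 0 -> g ^ e = g ^ c * g ^ (e - c).
Proof. by move=> g0; rewrite -expfzDr // addrC subrK. Qed.

Lemma sum_ratio {R : realType} L (hL : (2 <= L)%N) (i : 'I_L.+1) :
  \sum_(k | k != i) wt R i k / wt R i i <= (5/2) / ((L.+1)%:R ^+ 2).
Proof.
set g := gam R L.
set n : R := (L.+1)%:R.
have n3 : 3 <= n by rewrite /n ler_nat; lia.
have gE : g = n ^+ 3 by rewrite /g /gam natrX.
have g1 : 1 <= g by rewrite gE exprn_ege1 //; lra.
have g0 : 0 < g by apply: lt_le_trans g1.
have gn0 : g != 0 by rewrite gt_eqF.
set a : int := (i.+1)%:Z.
set G := g ^ (a*a).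
have G0 : 0 < G by apply: exprz_gt0.
set C := \sum_(r < L.+1) g ^ ((2 * r%:Z + 1) * a - r%:Z * r%:Z - r%:Z).
have wtE k : wt R i k = g ^ (2 * a * (k.+1)%:Z - (k.+1)%:Z * (k.+1)%:Z + 1) + C by [].
have C0 : 0 <= C by apply: sumr_ge0 => r _; apply: exprz_ge0; apply: ltW.
have hC : C <= G * (2 + n * g^-1).
  rewrite /C.
  apply: (@le_trans _ _ (\sum_(r < L.+1) G * (((r:nat) == i)%:R + ((r:nat) == i.+1)%:R + g^-1))).
    apply: ler_sum => r _; rewrite (splitz g (a*a) _ gn0) ler_pM2l //.
    have -> : (2 * r%:Z + 1) * a - r%:Z * r%:Z - r%:Z - a * a
        = - ((r%:Z - i%:Z) * ((r%:Z - i%:Z) - 1)) by rewrite /a; nia.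
    apply: (le_trans (L1 g (r%:Z - i%:Z) g1)).
    have e1 : (r%:Z - i%:Z == 0) = ((r:nat) == i) by apply/idP/idP => /eqP h; apply/eqP; lia.
    have e2 : (r%:Z - i%:Z == 1) = ((r:nat) == i.+1) by apply/idP/idP => /eqP h; apply/eqP; lia.
    by rewrite e1 e2.
  rewrite -mulr_sumr ler_pM2l // !big_split /= sumr_const card_ord -[_ *+ _]mulr_natl.
  rewrite -/n lerD2r.
  apply: le_trans (lerD (ind_sum L.+1 i) (ind_sum L.+1 i.+1)) _; lra.
have hE k : k != i -> g ^ (2 * a * (k.+1)%:Z - (k.+1)%:Z * (k.+1)%:Z + 1)
    <= G * (((k:nat) == i.+1)%:R + ((k:nat) == i.-1)%:R + g^-1).
  move=> hk; have hk' : (k:nat) != i by [].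
  rewrite (splitz g (a*a) _ gn0) ler_pM2l //.
  have -> : 2 * a * (k.+1)%:Z - (k.+1)%:Z * (k.+1)%:Z + 1 - a * a
     = 1 - (k%:Z - i%:Z) * (k%:Z - i%:Z) by rewrite /a; nia.
  have d0 : k%:Z - i%:Z != 0 by apply/eqP; move: hk'; lia.
  apply: (le_trans (L2 g (k%:Z - i%:Z) g1 d0)).
  rewrite lerD2r; apply: lerD.
    case: eqP => [h|_]; last by rewrite ler0n.
    by have -> : (k:nat) == i.+1 by apply/eqP; lia.
  case: eqP => [h|_]; last by rewrite ler0n.
  by have -> : (k:nat) == i.-1 by apply/eqP; lia.
have hS1 : \sum_(k | k != i) g ^ (2 * a * (k.+1)%:Z - (k.+1)%:Z * (k.+1)%:Z + 1)
    <= G * (2 + n * g^-1).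
  apply: (le_trans (ler_sum _ hE)).
  apply: (@le_trans _ _ (\sum_(k < L.+1) G * (((k:nat) == i.+1)%:R + ((k:nat) == i.-1)%:R + g^-1))).
    rewrite [X in _ <= X](bigD1 i) //= lerDr.
    apply: mulr_ge0; first exact: ltW.
    by rewrite !addr_ge0 // invr_ge0 ltW.
  rewrite -mulr_sumr ler_pM2l // !big_split /= sumr_const card_ord -[_ *+ _]mulr_natl.
  rewrite -/n lerD2r.
  apply: le_trans (lerD (ind_sum L.+1 i.+1) (ind_sum L.+1 i.-1)) _; lra.
have hS2 : \sum_(k | k != i) C = C *+ L.
  rewrite (eq_bigl (fun k => k \in predC1 i)) // sumr_const cardC1 card_ord.
  done.
have hW : G * g <= wt R i i.
  rewrite wtE (splitz g (a*a) _ gn0).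
  have -> : 2 * a * (i.+1)%:Z - (i.+1)%:Z * (i.+1)%:Z + 1 - a * a = 1 by rewrite /a; nia.
  by rewrite expr1z lerDl.
have wt0 : 0 < wt R i i by apply: lt_le_trans hW; apply: mulr_gt0.
rewrite -mulr_suml ler_pdivrMr //.
under eq_bigr do rewrite wtE.
rewrite big_split /= hS2.
apply: (@le_trans _ _ (G * (2 + n * g^-1) + (G * (2 + n * g^-1)) *+ L)).
  by apply: lerD => //; rewrite lerMn2r hC orbT.
apply: (@le_trans _ _ (5 / 2 / n ^+ 2 * (G * g))); last first.
  by rewrite ler_pM2l // divr_gt0 // exprn_gt0 //; lra.
have n0 : n != 0 by apply/eqP => h; move: n3; rewrite h; lra.
have -> : G * (2 + n * g^-1) + G * (2 + n * g^-1) *+ L = G * (2 * n + n^-1).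
  rewrite -mulrS -mulr_natl -/n gE; field.
  by apply: lt0r_neq0; have := ler0n R L; lra.
have -> : 5 / 2 / n ^+ 2 * (G * g) = G * (5 / 2 * n).
  rewrite gE; field.
  by apply: lt0r_neq0; have := ler0n R L; lra.
rewrite ler_pM2l //.
have : n^-1 <= 1 by rewrite invf_le1 //; lra.
move=> h; move: (n^-1) h => m h; clearbody n; lra.
Qed.

Definition dev {L} (xi : state L) : {set 'I_L.+1} := [set i | xi i != i].
Definition Fr (R : realType) {L} (xi : state L) : R := \prod_i (wt R i (xi i) / wt R i i).

Lemma wt_gt0 {R : realType} L (i k : 'I_L.+1) : 0 < wt R i k.
Proof.
have g0 : 0 < gam R L by rewrite /gam ltr0n expn_gt0.
rewrite /wt /=; apply: ltr_wpDr; last exact: exprz_gt0.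
by apply: sumr_ge0 => r _; apply: exprz_ge0; apply: ltW.
Qed.

Lemma ratio_ge0 {R : realType} L (i k : 'I_L.+1) : 0 <= wt R i k / wt R i i.
Proof. by apply: divr_ge0; apply: ltW; apply: wt_gt0. Qed.

Lemma Fr_ge0 {R : realType} {L} (xi : state L) : 0 <= Fr R xi.
Proof. by apply: prodr_ge0 => i _; apply: ratio_ge0. Qed.

Lemma comb {R : realType} L (hL : (2 <= L)%N) (D : nat) :
  \sum_(xi : state L | (D <= #|dev xi|)%N) Fr R xi
    <= 'C(L.+1, D)%:R * (5 / 2 / ((L.+1)%:R ^+ 2)) ^+ D * (1 + 5 / 2 / ((L.+1)%:R ^+ 2)) ^+ L.+1.
Proof.
set s : R := 5 / 2 / ((L.+1)%:R ^+ 2).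
have s0 : 0 <= s by rewrite divr_ge0 // ?exprn_ge0 //; lra.
apply: (@le_trans _ _ (\sum_(xi : state L)
   \sum_(A : {set 'I_L.+1} | (A \subset dev xi) && (#|A| == D)) Fr R xi)).
  rewrite [X in _ <= X](bigID (fun xi : state L => (D <= #|dev xi|)%N)) /=.
  apply: ler_wpDr.
    by apply: sumr_ge0 => xi _; apply: sumr_ge0 => A _; apply: Fr_ge0.
  apply: ler_sum => xi hD.
  rewrite (eq_bigl (fun A => A \in [set A : {set 'I_L.+1} | A \subset dev xi & #|A| == D]));
    last by move=> A; rewrite inE.
  rewrite sumr_const cards_draws -mulr_natr.
  apply: ler_peMr; first exact: Fr_ge0.
  by rewrite ler1n bin_gt0.
rewrite (exchange_big_dep (fun A : {set 'I_L.+1} => #|A| == D)) /=; last first.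
  by move=> xi A _ /andP[].
apply: (@le_trans _ _ (\sum_(A : {set 'I_L.+1} | #|A| == D) s ^+ D * (1 + s) ^+ L.+1)).
  apply: ler_sum => A /eqP hA.
  rewrite (eq_bigl (fun xi : state L => xi \in family (fun i k => (i \in A) ==> (k != i))));
    last first.
    move=> xi; rewrite hA eqxx andbT; apply/idP/idP.
      move/fintype.subsetP => H; apply/familyP => i; rewrite unfold_in /=.
      by apply/implyP => /H; rewrite inE.
    move/familyP => H; apply/fintype.subsetP => i iA; rewrite inE.
    by move: (H i) => /implyP; apply.
  rewrite /Fr -(bigA_distr_big_dep _ (fun i k => wt R i k / wt R i i)).
  apply: (@le_trans _ _ (\prod_i ((if i \in A then s else 1) * (1 + s)))).
    apply: ler_prod => i _; apply/andP; split.
      by apply: sumr_ge0 => k _; apply: ratio_ge0.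
    case: (boolP (i \in A)) => iA /=.
      apply: (le_trans (sum_ratio _ hL i)); rewrite -/s.
      by apply: ler_peMr => //; rewrite lerDl.
    rewrite (bigD1 i) //= divff ?gt_eqF ?wt_gt0 // mul1r lerD2l.
    exact: sum_ratio _ hL i.
  rewrite big_split /= prodr_const card_ord -big_mkcond /= prodr_const hA.
  done.
rewrite (eq_bigl (fun A => A \in [set A : {set 'I_L.+1} | #|A| == D]));
  last by move=> A; rewrite inE.
by rewrite sumr_const card_draws card_ord -[_ *+ 'C(_, _)]mulr_natl mulrA.
Qed.

Lemma ffact_leexp (m D : nat) : (m ^_ D <= m ^ D)%N.
Proof.
elim: D m => [|D IH] m; first by [].
rewrite ffactnS expnS leq_mul //; apply: leq_trans (IH _) _.
case: D {IH} => [|D]; first by [].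
by rewrite leq_exp2r //; apply: leq_pred.
Qed.

Lemma five_pow (D : nat) : (5 ^ D <= 4 * 2 ^ D * D`!)%N.
Proof.
elim: D => [|D IH]; first by [].
case: D IH => [|[|D]] IH; try by [].
move: IH; rewrite !expnS !factS; move: (5 ^ D)%N (2 ^ D)%N (D`!)%N => X Y Z; nia.
Qed.

Lemma binC_bound (m D : nat) : ('C(m, D) * 5 ^ D <= 4 * 2 ^ D * m ^ D)%N.
Proof.
apply: (@leq_trans ('C(m, D) * (4 * 2 ^ D * D`!))).
  by rewrite leq_mul2l five_pow orbT.
rewrite mulnCA bin_ffact.
by rewrite leq_mul2l ffact_leexp orbT.
Qed.

Lemma final_num {R : realType} L (hL : (2 <= L)%N) (D : nat) :
  'C(L.+1, D)%:R * (5 / 2 / ((L.+1)%:R ^+ 2)) ^+ D * (1 + 5 / 2 / ((L.+1)%:R ^+ 2)) ^+ L.+1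
  <= 4 * expR 1 * (((L.+1)%:R : R)^-1) ^+ D.
Proof.
set n : R := (L.+1)%:R.
have n3 : 3 <= n by rewrite /n ler_nat; lia.
have n0 : 0 < n by lra.
set s : R := 5 / 2 / n ^+ 2.
have s0 : 0 <= s by rewrite /s divr_ge0 // ?exprn_ge0 //; lra.
have hE : (1 + s) ^+ L.+1 <= expR 1.
  apply: (@le_trans _ _ (expR s ^+ L.+1)).
    by apply: lerXn2r; rewrite ?nnegrE ?expR_ge1Dx //; lra.
  rewrite -expRM_natl ler_expR -/n /s.
  have -> : n * (5 / 2 / n ^+ 2) = 5 / 2 / n by field; rewrite gt_eqF.
  rewrite ler_pdivrMr //; lra.
have hC : 'C(L.+1, D)%:R * s ^+ D <= 4 * n^-1 ^+ D.
  have -> : s = (5 / 2 / n) * n^-1 by rewrite /s expr2 invfM mulrA.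
  rewrite exprMn mulrA ler_pM2r ?exprn_gt0 ?invr_gt0 //.
  rewrite !expr_div_n mulrA.
  rewrite ler_pdivrMr; last exact: exprn_gt0.
  rewrite mulrA ler_pdivrMr; last by apply: exprn_gt0; lra.
  have := binC_bound L.+1 D; rewrite -(ler_nat R) !natrM !natrX -/n.
  by rewrite [_ * n ^+ D]mulrAC.
apply: (@le_trans _ _ ((4 * n^-1 ^+ D) * expR 1)); last by rewrite mulrAC.
apply: ler_pM => //.
  by apply: mulr_ge0; [apply: ler0n | apply: exprn_ge0].
by apply: exprn_ge0; lra.
Qed.

Lemma ndiff_dev L (xi : state L) : ndiff xi = #|dev xi|.
Proof. by rewrite /ndiff /dev; apply: eq_card => i; rewrite !inE ffunE. Qed.

Lemma ndiff_swap {L} {xi eta : state L} : adj_swap xi eta -> (ndiff eta <= ndiff xi + 2)%N.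
Proof.
case/existsP => j /andP[_ /eqP ->]; rewrite !ndiff_dev.
have : dev (swap_adj j xi) \subset dev xi :|: [set j; inord j.-1].
  apply/fintype.subsetP => i; rewrite !inE ffunE.
  case: (i =P j) => [->|_]; first by rewrite orbA orbT.
  case: (i =P inord j.-1) => [->|_]; first by rewrite !orbT.
  by rewrite !orbF.
move/subset_leq_card/leq_trans; apply.
rewrite cardsU; apply: leq_trans (leq_subr _ _) _.
by rewrite leq_add2l cards2; case: (_ != _).
Qed.

Lemma S_sub {L} : {subset Sset L <= Xlam L}.
Proof.
move=> xi; rewrite !inE; apply: connect_sub => x y /andP[hxy _].
exact: connect1.
Qed.

Lemma pii_gt0 {R : realType} L (i k : 'I_L.+1) : 0 < pii R i k.
Proof.
rewrite /pii; apply: divr_gt0; first exact: wt_gt0.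
rewrite (bigD1 i) //=; apply: ltr_wpDr; last exact: wt_gt0.
by apply: sumr_ge0 => h _; apply: ltW; apply: wt_gt0.
Qed.

Lemma pibar_gt0 {R : realType} L (xi : state L) : 0 < pibar R xi.
Proof. by apply: prodr_gt0 => i _; apply: pii_gt0. Qed.

Lemma pilam_ge0 {R : realType} L (xi : state L) : 0 <= pilam R xi.
Proof.
rewrite /pilam; apply: divr_ge0; first exact: ltW (pibar_gt0 _ _).
by apply: sumr_ge0 => eta _; apply: ltW; apply: pibar_gt0.
Qed.

Lemma pilam_le {R : realType} L (xi : state L) : pilam R xi <= Fr R xi.
Proof.
rewrite /pilam.
have hlam : lam L \in Xlam L by rewrite inE connect0.
have pl0 := pibar_gt0 (R:=R) _ (lam L).
have hZ : pibar R (lam L) <= \sum_(eta in Xlam L) pibar R eta.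
  rewrite (bigD1 (lam L)) //= lerDl.
  by apply: sumr_ge0 => eta _; apply: ltW; apply: pibar_gt0.
apply: (@le_trans _ _ (pibar R xi / pibar R (lam L))).
  rewrite ler_wpM2l ?lef_pV2 ?posrE //; first exact: ltW (pibar_gt0 _ _).
  exact: lt_le_trans hZ.
suff -> : pibar R xi / pibar R (lam L) = Fr R xi by [].
rewrite /pibar /Fr -prodf_div; apply: eq_bigr => i _; rewrite ffunE /pii.
have w1 := wt_gt0 (R:=R) _ i (xi i); have w2 := wt_gt0 (R:=R) _ i i.
have hN : \sum_(h : 'I_L.+1) wt R i h != 0.
  apply: lt0r_neq0; rewrite (bigD1 i) //=; apply: ltr_wpDr => //.
  by apply: sumr_ge0 => h _; apply: ltW; apply: wt_gt0.
by field; rewrite hN !gt_eqF.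
Qed.

Theorem lemma15 (R : realType) (L : nat) (hL : (2 <= L)%N)
  (P : state L -> state L -> R)
  (P_nonneg : forall xi eta, xi \in Xlam L -> eta \in Xlam L -> 0 <= P xi eta)
  (P_stoch : forall xi, xi \in Xlam L -> \sum_(eta in Xlam L) P xi eta = 1)
  (P_supp : forall xi eta, xi \in Xlam L -> eta \in Xlam L -> xi != eta ->
              0 < P xi eta -> adj_swap xi eta) :
  \sum_(xi in Sset L) \sum_(eta in SCset L) pilam R xi * P xi eta
    <= 4 * expR 1 * ((L.+1)%:R^-1) ^ ((trunc_log 2 L)%:Z - 2).
Proof.
set D := (dS L - 1)%N.
have SCsub : {subset SCset L <= Xlam L} by move=> eta; rewrite inE => /andP[].
apply: (@le_trans _ _ (\sum_(xi in Sset L) if (D <= ndiff xi)%N then pilam R xi else 0)).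
  apply: ler_sum => xi xiS.
  have xiX := S_sub _ xiS.
  case: ifP => hD.
    rewrite -mulr_sumr -[X in _ <= X]mulr1 -(P_stoch xi xiX).
    rewrite ler_wpM2l ?pilam_ge0 //.
    rewrite [X in _ <= X](bigID (fun eta => eta \in SCset L)) /=.
    rewrite [X in _ <= X + _](eq_bigl (fun eta => eta \in SCset L)); last first.
      by move=> eta; case: (boolP (eta \in SCset L)) => h; rewrite ?andbF ?andbT // SCsub.
    rewrite lerDl; apply: sumr_ge0 => eta /andP[h _]; exact: P_nonneg.
  rewrite big1 // => eta etaSC.
  have etaX := SCsub _ etaSC.
  have hP := P_nonneg _ _ xiX etaX.
  case: (ltrgt0P (P xi eta)) hP => //; last by move=> ->; rewrite mulr0.
  move=> hpos _.
  have neq : xi != eta.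
    by apply/eqP => e; move: etaSC; rewrite inE -e xiS.
  have hsw := P_supp _ _ xiX etaX neq hpos.
  have hn := ndiff_swap hsw.
  case: (leqP (ndiff eta) (dS L)) => hle.
    have : eta \in Sset L.
      move: xiS; rewrite !inE => hc; apply: connect_trans hc _.
      by apply: connect1; rewrite /= hsw hle.
    by move: etaSC; rewrite inE => /andP[/negbTE ->].
  by move: hD; rewrite /D; lia.
apply: (@le_trans _ _ (\sum_(xi : state L | (D <= #|dev xi|)%N) Fr R xi)).
  rewrite big_mkcond /= [X in _ <= X]big_mkcond /=.
  rewrite [X in _ <= X](bigID (fun xi => xi \in Sset L)) /= -big_mkcond /=.
  apply: ler_wpDr.
    by apply: sumr_ge0 => xi _; case: ifP => // _; apply: Fr_ge0.
  apply: ler_sum => xi _; rewrite ndiff_dev; case: ifP => // _.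
  exact: pilam_le.
apply: (le_trans (comb _ hL D)).
apply: (le_trans (final_num _ hL D)).
have he : 0 < 4 * expR 1 :> R by apply: mulr_gt0; [lra | apply: expR_gt0].
rewrite ler_pM2l // /D /dS.
have n1 : 1 <= ((L.+1)%:R : R) by rewrite ler1n.
case: (trunc_log 2 L) => [|[|t]] /=.
- rewrite expr0 exprz_inv (_ : - (0%:Z - 2) = 2%:Z) //.
  change (1 <= ((L.+1)%:R : R) ^+ 2); by apply: exprn_ege1.
- rewrite (_ : (1 - 1 - 1)%N = 0%N) // expr0 exprz_inv (_ : - (1%:Z - 2) = 1%:Z) //.
- rewrite (_ : (t.+2 - 1 - 1)%N = t); last by lia.
  by rewrite (_ : (t.+2)%:Z - 2 = t%:Z); last by lia.
Qed.
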